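(* Let $(\mathcal X,d)$ be a finite distance space and $\mathcal C=\{C_1,\ldots,C_k\}$ any clustering of $\mathcal X$ with cores $C_1^o,\ldots,C_k^o$, and let $\beta=\min_i|C_i^o|/|\mathcal X|$. Fix an integer $\ell$ with $k\le\ell\le|\mathcal X|$. Then for any ordering of $\mathcal X$, with probability at least $1-ke^{-\beta\ell}$ (over the internal randomness of Algorithm subsample), the final set $T$ produced by Algorithm subsample with parameter $\ell$ induces (when listed in any order) a clustering of $\mathcal X$ that is a refinement of $\mathcal C$.
   Context: A distance space $(\mathcal X,d)$ is a set with a symmetric function $d:\mathcal X\times\mathcal X\to\mathbb R_{\ge0}$ with $d(x,x)=0$. A clustering of $\mathcal X$ is a set of nonempty, pairwise disjoint subsets whose union is $\mathcal X$. The core of cluster $C_i$ is the maximal subset $C_i^o\subset C_i$ such that $d(x,z)<d(x,y)$ for all $x\in C_i$, $z\in C_i^o$, $y\notin C_i$. A list $T=(t_1,\ldots,t_m)$ induces the clustering of $\mathcal X$ assigning each $x$ to the index $i$ minimizing $d(x,t_i)$ (ties by smallest $i$), empty clusters discarded. $\mathcal C$ is a refinement of $\mathcal C'$ if $x\sim_{\mathcal C}y$ implies $x\sim_{\mathcal C'}y$, where $x\sim_{\mathcal C}y$ means $x,y$ lie in the same cluster of $\mathcal C$. Algorithm subsample with parameter $\ell$, on input sequence $x_1,\ldots,x_N$: set $T=\{x_1,\ldots,x_\ell\}$; for $t=\ell+1,\ldots,N$: receive $x_t$, and with probability $\ell/t$ (independently) remove an element of $T$ chosen uniformly at random and add $x_t$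 to $T$. Output the final $T$. *)

(* Defs.v *)
From Stdlib Require Import Reals ClassicalDescription.
From mathcomp Require Import all_boot.
Set Implicit Arguments. Unset Strict Implicit. Unset Printing Implicit Defensive.

Definition Rltb (a b : R) : bool := if Rlt_dec a b then true else false.
Definition Rleb (a b : R) : bool := if Rle_dec a b then true else false.

Section Defs.
Local Open Scope R_scope.
Variable T : finType.
Variable d : T -> T -> R.

Definition distance_space : Prop :=
  (forall x y, Rle 0 (d x y)) /\ (forall x y, d x y = d y x) /\ (forall x, d x x = R0).

(* core of a cluster C: the maximal subset C^o of C with
   d x z < d x y for all x in C, z in C^o, y not in C
   (= the set of all z in C satisfying the condition individually) *)
Definition core (C : {set T}) : {set T} :=
  [set z in C | [forall x in C, forall y in ~: C, Rltb (d x z) (d x y)]].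

(* index of the center assigned to x by the list ts:
   the first index i minimizing d x (ts_i) *)
Definition assign (ts : seq T) (x : T) : nat :=
  find (fun t => all (fun u => Rleb (d x t) (d x u)) ts) ts.

Definition induced_refines (ts : seq T) (P : {set {set T}}) : Prop :=
  forall x y : T, assign ts x = assign ts y ->
    exists2 C, C \in P & (x \in C) && (y \in C).

(* finite distributions over outputs: weighted list *)
Definition dist := seq (R * {set T}).

(* one step of Algorithm subsample at time t, receiving x:
   with probability l/t remove a uniformly random element of S and add x *)
Definition sub_step (l t : nat) (x : T) (D : dist) : dist :=
  let q := (INR l / INR t)%R in
  flatten (map (fun pS : R * {set T} =>
     let (p, S) := pS in
     (p * (1 - q), S) ::
       map (fun y => (p * q / INR #|S|, x |: (S :\ y))) (enum S)) D).

Fixpoint sub_run (l t : nat) (D : dist) (rest : seq T) : dist :=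
  match rest with
  | [::] => D
  | x :: r => sub_run l t.+1 (sub_step l t.+1 x D) r
  end.

Definition subsample (l : nat) (xs : seq T) : dist :=
  sub_run l l [:: (R1, [set x in take l xs])] (drop l xs).

Definition prob (D : dist) (E : {set T} -> Prop) : R :=
  foldr (fun pS acc => (if excluded_middle_informative (E pS.2)
                        then pS.1 else R0) + acc) R0 D.

End Defs.

(* Main.v *)
Require Import Defs.
From HB Require Import structures.
From Stdlib Require Import Reals Lra ClassicalDescription.
From mathcomp Require Import all_boot.
Set Implicit Arguments. Unset Strict Implicit. Unset Printing Implicit Defensive.
Local Open Scope R_scope.
Lemma Rplus_0_l' : left_id R0 Rplus. Proof. move=> x; ring. Qed.
Lemma Rplus_assoc' : associative Rplus. Proof. move=> x y z; ring. Qed.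
HB.instance Definition _ := Monoid.isComLaw.Build R R0 Rplus Rplus_assoc' Rplus_comm Rplus_0_l'.

Notation "\sumR_ ( i <- r ) F" := (\big[Rplus/R0]_(i <- r) F)
  (at level 41, F at level 41, i, r at level 50).

Lemma sumR_mull (I : Type) (r : seq I) (P : pred I) F c :
  c * \big[Rplus/R0]_(i <- r | P i) F i = \big[Rplus/R0]_(i <- r | P i) (c * F i).
Proof.
apply: (big_endo (fun v => c * v)) => [a b|]; ring.
Qed.

Lemma sumR_mulr (I : Type) (r : seq I) (P : pred I) F c :
  \big[Rplus/R0]_(i <- r | P i) F i * c = \big[Rplus/R0]_(i <- r | P i) (F i * c).
Proof.
rewrite Rmult_comm sumR_mull; apply: eq_bigr => i _; ring.
Qed.

Lemma sumR_const (I : finType) (P : pred I) c :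
  \big[Rplus/R0]_(i | P i) c = INR #|P| * c.
Proof.
rewrite big_const; elim: #|P| => [|n IH]; first by rewrite /=; ring.
by rewrite iterS IH S_INR; ring.
Qed.

Lemma sumR_ge0 (I : Type) (r : seq I) (P : pred I) F :
  (forall i, P i -> 0 <= F i) -> 0 <= \big[Rplus/R0]_(i <- r | P i) F i.
Proof.
move=> H; apply: (big_ind (fun v => 0 <= v)) => //; [lra | move=> a b H1 H2; lra].
Qed.

Lemma sumR_le (I : Type) (r : seq I) (P : pred I) F G :
  (forall i, P i -> F i <= G i) -> \big[Rplus/R0]_(i <- r | P i) F i <= \big[Rplus/R0]_(i <- r | P i) G i.
Proof.
move=> H; apply: (big_ind2 (fun u v => u <= v)) => //; [lra | move=> a b c e H1 H2; lra].
Qed.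

Section S.
Variable T : finType.

Definition Ex (D : Defs.dist T) (f : {set T} -> R) : R :=
  foldr (fun pS acc => pS.1 * f pS.2 + acc) 0 D.

Lemma prob_Ex D E : prob D E = Ex D (fun S => if excluded_middle_informative (E S) then 1 else 0).
Proof.
elim: D => [|[p S] D IH] //=; rewrite IH; by case: excluded_middle_informative => [h|h] /=; ring.
Qed.

Lemma Ex_cat D1 D2 f : Ex (D1 ++ D2) f = Ex D1 f + Ex D2 f.
Proof. elim: D1 => [|a D1 IH] /=; [ring| rewrite IH; ring]. Qed.

Lemma Ex_map (I : Type) (L : seq I) c s f :
  Ex (map (fun y => (c y, s y)) L) f = \big[Rplus/R0]_(y <- L) (c y * f (s y)).
Proof. elim: L => [|a L IH] /=; [by rewrite big_nil | by rewrite big_cons IH]. Qed.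

Definition Fstep (l t : nat) (x : T) (f : {set T} -> R) (S : {set T}) : R :=
  (1 - INR l / INR t) * f S +
  \big[Rplus/R0]_(y <- enum S) (INR l / INR t / INR #|S| * f (x |: (S :\ y))).

Lemma Ex_step l t x D f : Ex (sub_step l t x D) f = Ex D (Fstep l t x f).
Proof.
elim: D => [|[p S] D IH] //=.
rewrite /sub_step /= Ex_cat -/(sub_step l t x D) IH /= Ex_map /Fstep.
rewrite Rmult_plus_distr_l sumR_mull.
rewrite (eq_bigr (fun y => p * (INR l / INR t / INR #|S| * f (x |: S :\ y)))); first ring.
by move=> y _; rewrite /Rdiv; ring.
Qed.

Lemma reindex (g : {set T} -> R) (a : {set T} -> T -> R) (phi : {set T} -> T -> {set T}) :
  \big[Rplus/R0]_(U : {set T}) \big[Rplus/R0]_(y in U) (a U y * g (phi U y)) =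
  \big[Rplus/R0]_(V : {set T})
     ((\big[Rplus/R0]_(U : {set T}) \big[Rplus/R0]_(y in U) (if phi U y == V then a U y else 0)) * g V).
Proof.
symmetry.
rewrite (eq_bigr (fun V => \big[Rplus/R0]_(U : {set T}) \big[Rplus/R0]_(y in U)
     ((if phi U y == V then a U y else 0) * g V))); last first.
  move=> V _; rewrite sumR_mulr; apply: eq_bigr => U _; by rewrite sumR_mulr.
rewrite exchange_big; apply: eq_bigr => U _.
rewrite exchange_big; apply: eq_bigr => y _.
rewrite (bigD1 (phi U y)) //= eqxx big1; first ring.
by move=> V /negbTE; rewrite eq_sym => ->; ring.
Qed.

Definition wt (l t : nat) (A U : {set T}) : R :=
  if (U \subset A) && (#|U| == l)%N then / INR 'C(t, l) else 0.

Definition Unif l t A (D : Defs.dist T) := forall g,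
  Ex D g = \big[Rplus/R0]_(U : {set T}) (wt l t A U * g U).

Lemma count_pt (l t : nat) (A V U : {set T}) (x y : T) : x \notin A ->
  (if y \in U then (if x |: U :\ y == V then wt l t A U else 0) else 0) =
  if U == y |: (V :\ x) then
    (if [&& y \in A, y \notin V, x \in V, V :\ x \subset A & (#|V| == l)%N]
     then / INR 'C(t, l) else 0) else 0.
Proof.
move=> xA.
have -> : (if y \in U then (if x |: U :\ y == V then wt l t A U else 0) else 0) =
  if [&& y \in U, x |: U :\ y == V, U \subset A & (#|U| == l)%N] then / INR 'C(t, l) else 0.
  rewrite /wt; case: (boolP (y \in U)) => //= _; case: (boolP (x |: U :\ y == V)) => //= _.
have -> : (if U == y |: (V :\ x) then
    (if [&& y \in A, y \notin V, x \in V, V :\ x \subset A & (#|V| == l)%N]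
     then / INR 'C(t, l) else 0) else 0) =
  if (U == y |: (V :\ x)) && [&& y \in A, y \notin V, x \in V, V :\ x \subset A & (#|V| == l)%N]
     then / INR 'C(t, l) else 0.
  by case: (boolP (U == y |: (V :\ x))) => //= _.
congr (if _ then _ else _).
apply/idP/idP.
- case/and4P => yU /eqP eV sUA /eqP cU; subst V.
  have yA : y \in A by apply: (subsetP sUA).
  have xy : y != x by apply/eqP => e; subst; rewrite yA in xA.
  have xU : x \notin U :\ y.
    by rewrite !inE negb_and negbK; case: (x =P y) => //= _; apply/negP => /(subsetP sUA); rewrite (negbTE xA).
  rewrite setU1K // setD1K // eqxx yA /=.
  rewrite !inE negb_or xy eqxx /= (subset_trans (subD1set U y) sUA) /=.
  rewrite cardsU1 xU; move: cU; rewrite (cardsD1 y U) yU => <-. by rewrite !eqxx.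
- case/andP => /eqP eU /and5P [yA yV xV sVA /eqP cV]; subst U.
  have yVx : y \notin V :\ x by rewrite !inE negb_and yV orbT.
  rewrite !inE eqxx /= setU1K // setD1K // eqxx /=.
  apply/andP; split.
    by apply/subsetP => z; rewrite !inE; case/orP => [/eqP -> //| /andP [zx zV]]; apply: (subsetP sVA); rewrite !inE zx.
  rewrite cardsU1 yVx; move: cV; rewrite (cardsD1 x V) xV => <-. by [].
Qed.


Lemma sumR_if (I : finType) (P : pred I) c :
  \big[Rplus/R0]_i (if P i then c else 0) = INR #|P| * c.
Proof. rewrite -sumR_const [RHS]big_mkcond; apply: eq_bigr => i _; by case: (P i). Qed.

Lemma count_sum (l t : nat) (A V : {set T}) (x : T) : x \notin A ->
  \big[Rplus/R0]_(U : {set T}) \big[Rplus/R0]_(y in U) (if x |: U :\ y == V then wt l t A U else 0) =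
  if [&& x \in V, V :\ x \subset A & (#|V| == l)%N]
  then INR #|A :\: V| * / INR 'C(t, l) else 0.
Proof.
move=> xA.
rewrite (eq_bigr (fun U : {set T} => \big[Rplus/R0]_(y : T)
   (if y \in U then (if x |: U :\ y == V then wt l t A U else 0) else 0))); last first.
  by move=> U _; rewrite big_mkcond.
rewrite exchange_big.
rewrite (eq_bigr (fun y => if [&& y \in A, y \notin V, x \in V, V :\ x \subset A & (#|V| == l)%N]
     then / INR 'C(t, l) else 0)); last first.
  move=> y _; rewrite (eq_bigr _ (fun U _ => @count_pt l t A V U x y xA)).
  rewrite (bigD1 (y |: (V :\ x))) //= eqxx big1; first ring.
  by move=> U /negbTE ->.
case: (boolP [&& x \in V, V :\ x \subset A & (#|V| == l)%N]) => HR.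
  have -> : #|A :\: V| = #|[pred y | (y \in A) && (y \notin V)]|.
    by apply: eq_card => y; rewrite !inE andbC.
  by rewrite -sumR_if; apply: eq_bigr => y _; rewrite andbT.
by rewrite big1 // => y _; rewrite !andbF.
Qed.


Lemma real_id (t l : nat) : (0 < l)%N -> (l <= t)%N ->
  INR l / INR t.+1 / INR l * INR (t.+1 - l) * / INR 'C(t, l) = / INR 'C(t.+1, l) /\
  / INR 'C(t, l) * (1 - INR l / INR t.+1) = / INR 'C(t.+1, l).
Proof.
move=> l0 lt.
have H := mul_bin_down t.+1 l; rewrite /= in H.
have HR : INR t.+1 * INR 'C(t, l) = INR (t.+1 - l) * INR 'C(t.+1, l)
  by rewrite -!mult_INR !multE H.
have C0 : 0 < INR 'C(t, l) by apply: lt_0_INR; apply/ltP; rewrite bin_gt0.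
have C1 : 0 < INR 'C(t.+1, l) by apply: lt_0_INR; apply/ltP; rewrite bin_gt0; apply: leqW.
have L0 : 0 < INR l by apply: lt_0_INR; apply/ltP.
have N0 : 0 < INR t.+1 by apply: lt_0_INR; apply/ltP.
have M : INR (t.+1 - l) = INR t.+1 - INR l.
  by rewrite minus_INR //; apply/leP; apply: leqW.
have MP : 0 < INR (t.+1 - l) by apply: lt_0_INR; apply/ltP; rewrite subn_gt0 ltnS.
have e : / INR 'C(t.+1, l) = INR (t.+1 - l) / (INR t.+1 * INR 'C(t, l)).
  rewrite HR; field; split; lra.
rewrite e M; split; field; repeat split; lra.
Qed.

Lemma coef (l t : nat) (A V : {set T}) (x : T) : (0 < l)%N -> (l <= t)%N -> #|A| = t -> x \notin A ->
  wt l t.+1 (x |: A) V = wt l t A V * (1 - INR l / INR t.+1) +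
   (if [&& x \in V, V :\ x \subset A & (#|V| == l)%N]
    then INR #|A :\: V| * / INR 'C(t, l) else 0) * (INR l / INR t.+1 / INR l).
Proof.
move=> l0 lt cA xA; have [e1 e2] := real_id l0 lt.
rewrite /wt; case: (boolP (x \in V)) => xV.
  have -> : V \subset A = false.
    by apply/negbTE; apply/negP => /subsetP /(_ x xV); rewrite (negbTE xA).
  rewrite andFb subDset.
  case: (boolP (V \subset x |: A)) => sV; rewrite ?andTb ?andFb ?andbF; last by ring.
  case: (boolP (#|V| == l)%N) => cV; rewrite ?andTb ?andFb ?andbF; last by ring.
  have -> : #|A :\: V| = (t.+1 - l)%N.
    rewrite cardsD cA.
    have -> : A :&: V = V :\ x.
      apply/setP => z; rewrite !inE; case: (z =P x) => [->|/eqP nzx] /=; first by rewrite (negbTE xA).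
      case zV: (z \in V); last by rewrite andbF.
      by move: (subsetP sV z zV); rewrite !inE (negbTE nzx) /= => ->.
    move: cV; rewrite (cardsD1 x V) xV => /eqP <-; by rewrite add1n subSS.
  rewrite -e1; ring.
have -> : (V \subset x |: A) = (V \subset A).
  apply/idP/idP => /subsetP H; apply/subsetP => z zV; move: (H z zV); rewrite !inE //.
    by case: (z =P x) => //= e; subst; rewrite zV in xV.
  by move=> ->; rewrite orbT.
rewrite andFb; case: ifP => _; last by ring.
rewrite -e2; ring.
Qed.

Lemma Unif_step (l t : nat) (A : {set T}) (x : T) (D : Defs.dist T) : (0 < l)%N -> (l <= t)%N -> #|A| = t -> x \notin A ->
  Unif l t A D -> Unif l t.+1 (x |: A) (sub_step l t.+1 x D).
Proof.
move=> l0 lt cA xA HD g; rewrite Ex_step HD /Fstep.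
set q := INR l / INR t.+1.
transitivity (\big[Rplus/R0]_(U : {set T}) (wt l t A U * (1 - q) * g U) +
  \big[Rplus/R0]_(U : {set T}) \big[Rplus/R0]_(y in U) ((wt l t A U * (q / INR l)) * g (x |: U :\ y))).
  rewrite -big_split; apply: eq_bigr => U _ /=; rewrite big_enum /= Rmult_plus_distr_l sumR_mull.
  congr (_ + _); first ring.
  apply: eq_bigr => y _; rewrite /wt; case: ifP => [/andP [_ /eqP ->] | _]; ring.
rewrite reindex -big_split; apply: eq_bigr => V _ /=.
have E : \big[Rplus/R0]_(U : {set T}) \big[Rplus/R0]_(y in U)
     (if x |: U :\ y == V then wt l t A U * (q / INR l) else 0) =
   (\big[Rplus/R0]_(U : {set T}) \big[Rplus/R0]_(y in U)
     (if x |: U :\ y == V then wt l t A U else 0)) * (q / INR l).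
  rewrite sumR_mulr; apply: eq_bigr => U _; rewrite sumR_mulr; apply: eq_bigr => y _.
  by case: ifP => _; ring.
rewrite E count_sum // (coef V l0 lt cA xA) /q; ring.
Qed.


Definition Xs (xs : seq T) (t : nat) : {set T} := [set z in take t xs].

Lemma Unif_run l xs : uniq xs -> (0 < l)%N -> forall k t D, (t + k = size xs)%N -> (l <= t)%N ->
  Unif l t (Xs xs t) D -> Unif l (size xs) (Xs xs (size xs)) (sub_run l t D (drop t xs)).
Proof.
move=> uxs l0; elim=> [|k IH] t D htk hlt HD.
  by rewrite addn0 in htk; subst t; rewrite drop_size.
have ts : (t < size xs)%N by rewrite -htk addnS ltnS leq_addr.
case E: xs => [|x0 s]; first by rewrite E in ts.
rewrite -E (drop_nth x0 ts) /=.
apply: IH; first by rewrite -htk addSnnS.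
  exact: leqW.
have -> : Xs xs t.+1 = nth x0 xs t |: Xs xs t.
  by apply/setP => z; rewrite /Xs (take_nth x0 ts) !inE mem_rcons in_cons.
have U1 : uniq (rcons (take t xs) (nth x0 xs t)) by rewrite -(take_nth x0 ts) take_uniq.
rewrite rcons_uniq in U1; case/andP: U1 => U1 U2.
apply: Unif_step => //.
  rewrite /Xs cardsE; move/card_uniqP: U2 => ->; rewrite size_take ts //.
by rewrite /Xs inE.
Qed.

Lemma exists_min (f : T -> R) (s : seq T) : s != [::] ->
  exists2 t, t \in s & forall u, u \in s -> f t <= f u.
Proof.
elim: s => [|a s IH] // _.
case: (altP (s =P [::])) => [-> | ns].
  by exists a; rewrite ?mem_seq1 // => u; rewrite mem_seq1 => /eqP ->; lra.
have [b bs Hb] := IH ns.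
case: (Rle_dec (f a) (f b)) => h.
  exists a; first by rewrite in_cons eqxx.
  move=> u; rewrite in_cons => /orP [/eqP -> | us]; first lra.
  by have := Hb u us; lra.
exists b; first by rewrite in_cons bs orbT.
move=> u; rewrite in_cons => /orP [/eqP -> | us]; first lra.
exact: Hb.
Qed.

Lemma assign_in (d : T -> T -> R) (C U : {set T}) (ts : seq T) (x z : T) :
  perm_eq ts (enum U) -> x \in C -> z \in U -> z \in core d C ->
  nth x ts (assign d ts x) \in C.
Proof.
move=> pts xC zU zc.
have zts : z \in ts by rewrite (perm_mem pts) mem_enum.
have nts : ts != [::] by apply/eqP => e; rewrite e in zts.
have [t0 t0s Ht0] := exists_min (d x) nts.
set a := fun t => all (fun u => Rleb (d x t) (d x u)) ts.
have ha : has a ts.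
  apply/hasP; exists t0 => //; apply/allP => u us.
  by rewrite /Rleb; case: Rle_dec => // h; exfalso; apply: h; apply: Ht0.
have fi := nth_find x ha.
have := fi; rewrite /a => /allP /(_ z zts); rewrite /Rleb; case: Rle_dec => // hle _.
apply/negPn/negP => nC.
move: zc; rewrite /core inE => /andP [_ /forallP /(_ x)]; rewrite xC /=.
move=> /forallP /(_ (nth x ts (find a ts))); rewrite inE nC /= /Rltb.
case: Rlt_dec => // hlt _.
move: hlt; rewrite /a /Rleb => hlt; lra.
Qed.

Lemma refine_ok (d : T -> T -> R) (P : {set {set T}}) (U : {set T}) :
  partition P [set: T] -> (forall C, C \in P -> U :&: core d C != set0) ->
  forall ts, perm_eq ts (enum U) -> induced_refines d ts P.
Proof.
move=> hP hC ts pts x y exy.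
move: hP => /and3P [/eqP cov triv _].
have pb : forall w, pblock P w \in P /\ w \in pblock P w.
  by move=> w; rewrite pblock_mem ?mem_pblock cov inE.
have inb : forall w, nth w ts (assign d ts w) \in pblock P w.
  move=> w; have [pP wP] := pb w.
  have /set0Pn [z] := hC _ pP; rewrite inE => /andP [zU zc].
  exact: (assign_in pts wP zU zc).
have [px _] := pb x; exists (pblock P x) => //.
have [_ xb] := pb x; rewrite xb /=.
have h1 := inb x; have h2 := inb y.
have [py yb] := pb y.
have nts : ts != [::].
  have /set0Pn [z] := hC _ px; rewrite inE => /andP [zU _].
  by apply/eqP => e; move: zU; rewrite -mem_enum -(perm_mem pts) e.
have lt : (assign d ts y < size ts)%N.
  rewrite /assign -has_find.
  have [t0 t0s Ht0] := exists_min (d y) nts.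
  apply/hasP; exists t0 => //; apply/allP => u us.
  by rewrite /Rleb; case: Rle_dec => // h; exfalso; apply: h; apply: Ht0.
have ty : nth x ts (assign d ts x) \in pblock P y by rewrite exy (set_nth_default y x lt).
have e1 := def_pblock triv px h1.
have e2 := def_pblock triv py ty.
by rewrite -e1 e2.
Qed.

End S.

Lemma bigmin_le (I : finType) (P : pred I) (F : I -> nat) x0 i :
  P i -> (\big[minn/x0]_(j | P j) F j <= F i)%N.
Proof.
move=> Pi; have : i \in index_enum I by rewrite mem_index_enum.
elim: (index_enum I) => [|a r IH] //; rewrite in_cons big_cons.
case/orP => [/eqP <- | ir]; first by rewrite Pi geq_minl.
case: (P a); last exact: IH.
by rewrite geq_min IH ?orbT.
Qed.

Lemma ffact_bound a n l : (a <= n)%N -> (a ^_ l * n ^ l <= a ^ l * n ^_ l)%N.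
Proof.
move=> an; elim: l => [|l IH]; first by rewrite !ffactn0 !expn0.
rewrite !ffactnSr !expnSr mulnACA [X in (_ <= X)%N]mulnACA.
apply: leq_mul => //.
rewrite mulnBl mulnBr; apply: leq_sub2l.
by rewrite [(a * l)%N]mulnC leq_mul2l an orbT.
Qed.

Lemma bin_bound m n l : (m <= n)%N -> ('C(n - m, l) * n ^ l <= (n - m) ^ l * 'C(n, l))%N.
Proof.
move=> mn; rewrite -(leq_pmul2r (fact_gt0 l)) mulnAC bin_ffact -mulnA bin_ffact.
apply: ffact_bound; exact: leq_subr.
Qed.

Lemma INR_expn a l : INR (a ^ l) = INR a ^ l.
Proof. elim: l => [|l IH] //; rewrite expnS -multE mult_INR IH /=; ring. Qed.

Lemma exp_pow x l : exp x ^ l = exp (x * INR l).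
Proof.
elim: l => [|l IH]; first by rewrite /= Rmult_0_r exp_0.
change (exp x ^ l.+1) with (exp x * exp x ^ l); rewrite IH -exp_plus S_INR; congr exp; ring.
Qed.

Lemma exp_le x y : x <= y -> exp x <= exp y.
Proof. case/Rle_lt_or_eq_dec => [h|->]; [left; exact: exp_increasing | lra]. Qed.

Lemma real_bound (n m mm l : nat) : (0 < n)%N -> (mm <= m)%N -> (m <= n)%N -> (l <= n)%N ->
  INR 'C(n - m, l) * / INR 'C(n, l) <= exp (- (INR mm / INR n * INR l)).
Proof.
move=> n0 mmm mn ln.
have N0 : 0 < INR n by apply: lt_0_INR; apply/ltP.
have Cn : 0 < INR 'C(n, l) by apply: lt_0_INR; apply/ltP; rewrite bin_gt0.
have Hb : INR 'C(n - m, l) * INR n ^ l <= INR (n - m) ^ l * INR 'C(n, l).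
  rewrite -!INR_expn -!mult_INR; apply: le_INR; apply/leP; rewrite !multE; exact: bin_bound.
have Nl : 0 < INR n ^ l by apply: pow_lt.
have H1 : INR 'C(n - m, l) * / INR 'C(n, l) <= (INR (n - m) / INR n) ^ l.
  rewrite /Rdiv Rpow_mult_distr pow_inv.
  apply: (Rmult_le_reg_r (INR 'C(n, l) * INR n ^ l)); first exact: Rmult_lt_0_compat.
  have -> : INR 'C(n - m, l) * / INR 'C(n, l) * (INR 'C(n, l) * INR n ^ l) = INR 'C(n - m, l) * INR n ^ l.
    by field; repeat split; lra.
  have -> : INR (n - m) ^ l * / INR n ^ l * (INR 'C(n, l) * INR n ^ l) = INR (n - m) ^ l * INR 'C(n, l).
    by field; repeat split; lra.
  exact: Hb.
have mle : INR m <= INR n by apply: le_INR; apply/leP.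
have mmle : INR mm <= INR m by apply: le_INR; apply/leP.
have H2 : INR (n - m) / INR n = 1 - INR m / INR n.
  by rewrite minus_INR; [field; lra | apply/leP].
have H3 : 0 <= 1 - INR m / INR n.
  have : INR m / INR n <= 1.
    apply: (Rmult_le_reg_r (INR n)) => //; rewrite /Rdiv Rmult_assoc Rinv_l; lra.
  lra.
apply: (Rle_trans _ _ _ H1); rewrite H2.
apply: (Rle_trans _ ((exp (- (INR m / INR n))) ^ l)).
  apply: pow_incr; split => //; have := exp_ineq1_le (- (INR m / INR n)); lra.
rewrite exp_pow; apply: exp_le.
have L0 : 0 <= INR l by apply: pos_INR.
have : INR mm / INR n * INR l <= INR m / INR n * INR l.
  apply: Rmult_le_compat_r => //; rewrite /Rdiv; apply: Rmult_le_compat_r => //.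
  by left; apply: Rinv_0_lt_compat.
lra.
Qed.

Unset Implicit Arguments.
Local Close Scope R_scope.
Theorem mainTheorem12 (T : finType) (d : T -> T -> R)
  (hd : distance_space d)
  (P : {set {set T}}) (hP : partition P [set: T])
  (l : nat) (hkl : (#|P| <= l)%N) (hlX : (l <= #|T|)%N)
  (xs : seq T) (hxs : perm_eq xs (enum T)) :
  let beta := Rdiv (INR (\big[minn/#|T|]_(C in P) #|core d C|)) (INR #|T|) in
  Rle (Rminus R1 (Rmult (INR #|P|) (exp (Ropp (Rmult beta (INR l))))))
      (prob (subsample l xs)
        (fun S => forall ts : seq T, perm_eq ts (enum S) -> induced_refines d ts P)).
Proof.
Local Open Scope R_scope.
move=> beta.
set E := (fun S : {set T} => forall ts : seq T, perm_eq ts (enum S) -> induced_refines d ts P).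
have huniq : uniq xs by rewrite (perm_uniq hxs) enum_uniq.
have hsz : size xs = #|T| by rewrite (perm_size hxs) -cardT.
case: (posnP l) => [l0 | lpos].
  subst l; move: hkl; rewrite leqn0 => /eqP k0.
  have P0 : P = set0 by apply/eqP; rewrite -cards_eq0 k0.
  have Tn : forall x : T, False.
    move=> x; move: hP => /and3P [/eqP cov _ _].
    have : x \in cover P by rewrite cov inE.
    by rewrite P0 /cover big_set0 inE.
  have xs0 : xs = [::] by case: xs hxs {hsz huniq} => // x s _; case: (Tn x).
  subst xs; rewrite /prob /subsample /= k0.
  case: excluded_middle_informative => [h | n]; first by rewrite /=; lra.
  by exfalso; apply: n => ts _ x; case: (Tn x).
set n := #|T|.
have cXl : #|Xs xs l| = l.
  rewrite /Xs cardsE; move/card_uniqP: (take_uniq l huniq) => ->; rewrite size_take hsz.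
  by case: ltnP => // h; apply/eqP; rewrite eqn_leq hlX h.
have HU0 : Unif l l (Xs xs l) [:: (R1, Xs xs l)].
  move=> g; rewrite /Ex /= (bigD1 (Xs xs l)) //= big1.
    by rewrite /wt subxx cXl eqxx binn /=; rewrite Rinv_1; ring.
  move=> U nU; rewrite /wt; case: ifP; last by move=> _; ring.
  case/andP => sU /eqP cU; exfalso; move/negP: nU; apply.
  by rewrite eqEcard sU cU cXl leqnn.
have hk : (l + (size xs - l) = size xs)%N by rewrite hsz subnKC.
have HU := Unif_run huniq lpos hk (leqnn l) HU0.
rewrite prob_Ex /subsample -/(Xs xs l) HU.
have -> : Xs xs (size xs) = [set: T].
  by apply/setP => z; rewrite /Xs !inE take_size (perm_mem hxs) mem_enum.
rewrite hsz -/n.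
set I := fun U => if excluded_middle_informative (E U) then 1 else 0.
set M := fun (C U : {set T}) => if U :&: core d C == set0 then 1 else 0.
have Cn : 0 < INR 'C(n, l) by apply: lt_0_INR; apply/ltP; rewrite bin_gt0.
have wge : forall U, 0 <= wt l n [set: T] U.
  move=> U; rewrite /wt; case: ifP => _; [left; exact: Rinv_0_lt_compat | lra].
have w1 : \big[Rplus/R0]_(U : {set T}) wt l n [set: T] U = 1.
  rewrite (eq_bigr (fun U : {set T} => if #|U| == l then / INR 'C(n, l) else 0)); last first.
    by move=> U _; rewrite /wt subsetT.
  rewrite (@sumR_if _ (fun U : {set T} => #|U| == l)).
  have -> : #|(fun U : {set T} => #|U| == l)| = 'C(n, l).
    by rewrite -card_draws; apply: eq_card => U; rewrite inE.
  by rewrite Rinv_r //; lra.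
have key : forall U, 1 - I U <= \big[Rplus/R0]_(C in P) M C U.
  move=> U; rewrite /I; case: excluded_middle_informative => h.
    have := @sumR_ge0 _ (index_enum {set T}) (fun C => C \in P) (fun C => M C U).
    by rewrite /M => H; have := H (fun C _ => ltac:(case: ifP => _; lra)); rewrite /=; lra.
  case: (boolP [exists C, (C \in P) && (U :&: core d C == set0)]) => hex.
    case/existsP: hex => C0 /andP [C0P hC0].
    rewrite /= (bigD1 C0) //= /M hC0.
    have := @sumR_ge0 _ (index_enum {set T}) (fun C => (C \in P) && (C != C0)) (fun C => M C U).
    rewrite /M => H; have H2 := H (fun C _ => ltac:(case: ifP => _; lra)).
    set X := (X in _ <= 1 + X); have : 0 <= X by exact: H2.
    lra.
  exfalso; apply: h; apply: refine_ok hP _ => C CP.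
  apply/negP => e; move/negP: hex; apply; apply/existsP; exists C; by rewrite CP e.
have bnd : forall C, C \in P ->
    \big[Rplus/R0]_(U : {set T}) (wt l n [set: T] U * M C U) <= exp (- (beta * INR l)).
  move=> C CP.
  rewrite (eq_bigr (fun U : {set T} => if (U \subset ~: core d C) && (#|U| == l)
                         then / INR 'C(n, l) else 0)); last first.
    move=> U _; rewrite /wt /M subsetT /= setI_eq0 disjoints_subset.
    by case: (U \subset ~: core d C); case: (#|U| == l) => /=; ring.
  rewrite (@sumR_if _ (fun U : {set T} => (U \subset ~: core d C) && (#|U| == l))).
  have -> : #|(fun U : {set T} => (U \subset ~: core d C) && (#|U| == l))| = 'C(n - #|core d C|, l).
    rewrite [#|core d C|]cardsCs subKn; last by rewrite /n max_card.
    by rewrite -cards_draws; apply: eq_card => U; rewrite inE.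
  apply: real_bound.
  - by apply: (leq_trans lpos).
  - exact: bigmin_le.
  - exact: max_card.
  - exact: hlX.
have split1 : \big[Rplus/R0]_(U : {set T}) (wt l n [set: T] U * I U) =
   \big[Rplus/R0]_(U : {set T}) wt l n [set: T] U -
   \big[Rplus/R0]_(U : {set T}) (wt l n [set: T] U * (1 - I U)).
  have H : \big[Rplus/R0]_(U : {set T}) wt l n [set: T] U =
     \big[Rplus/R0]_(U : {set T}) (wt l n [set: T] U * I U) +
     \big[Rplus/R0]_(U : {set T}) (wt l n [set: T] U * (1 - I U)).
    by rewrite -big_split; apply: eq_bigr => U _ /=; ring.
  rewrite H; ring.
rewrite split1 w1.
have le1 : \big[Rplus/R0]_(U : {set T}) (wt l n [set: T] U * (1 - I U)) <=
   \big[Rplus/R0]_(C in P) \big[Rplus/R0]_(U : {set T}) (wt l n [set: T] U * M C U).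
  rewrite exchange_big /=.
  apply: sumR_le => U _; rewrite -sumR_mull.
  by apply: Rmult_le_compat_l; [exact: wge | exact: key].
have le2 : \big[Rplus/R0]_(C in P) \big[Rplus/R0]_(U : {set T}) (wt l n [set: T] U * M C U)
   <= INR #|P| * exp (- (beta * INR l)).
  rewrite -sumR_const; exact: sumR_le.
lra.
Qed.
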